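(* Let $k$ be a field of characteristic $p>0$, $S=k[[x_1,\dots,x_n]]$, and let $I=I_{\alpha_1}\cap\cdots\cap I_{\alpha_s}$ be the minimal primary decomposition of a squarefree monomial ideal $I\subseteq S$ into face ideals. Then for every $q=p^e$, $e\ge 0$, $$(I^{[q]}:_S I)=\big(I_{\alpha_1}^{[q]}+(({\bf x}^{\alpha_1})^{q-1})\big)\cap\cdots\cap\big(I_{\alpha_s}^{[q]}+(({\bf x}^{\alpha_s})^{q-1})\big).$$
   Context: For $\alpha\in\{0,1\}^n$, the face ideal is $I_\alpha=\langle x_i:\alpha_i\ne0\rangle$ and ${\bf x}^\alpha=x_1^{\alpha_1}\cdots x_n^{\alpha_n}$. A squarefree monomial ideal is an ideal generated by monomials ${\bf x}^\alpha$ with $\alpha\in\{0,1\}^n$; its minimal primary decomposition is an irredundant intersection of face ideals. $J^{[q]}$ denotes the ideal generated by $q$-th powers of elements of $J$. *)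

(* Defs.v *)
From HB Require Import structures.
From mathcomp Require Import all_boot all_algebra.
Set Implicit Arguments. Unset Strict Implicit. Unset Printing Implicit Defensive.
Import GRing.Theory.
Local Open Scope ring_scope.

Section PS.
Variables (k : fieldType) (n : nat).

Definition expo := {ffun 'I_n -> nat}.

(* formal power series: arbitrary coefficient functions N^n -> k *)
Definition ps := expo -> k.

Definition bnd (m : expo) : nat := (\max_(i < n) m i).+1.

Definition lowa (N : nat) (a : {ffun 'I_n -> 'I_N}) : expo :=
  [ffun i => nat_of_ord (a i)].

Definition esub (m a : expo) : expo := [ffun i => (m i - a i)%N].

Definition ps_zero : ps := fun _ => 0.
Definition ps_add (f g : ps) : ps := fun m => f m + g m.

(* Cauchy product: (f g)_m = sum_{a <= m} f_a g_(m-a) *)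
Definition ps_mul (f g : ps) : ps := fun m =>
  \sum_(a : {ffun 'I_n -> 'I_(bnd m)} | [forall i, (a i <= m i)%N])
     f (lowa a) * g (esub m (lowa a)).

Definition ps_monom (b : expo) : ps := fun m => if m == b then 1 else 0.
Definition ps_one : ps := ps_monom [ffun=> 0%N].
Definition ps_exp (f : ps) (q : nat) : ps := iter q (ps_mul f) ps_one.

Definition ps_var (i : 'I_n) : ps := ps_monom [ffun j => nat_of_bool (j == i)].

Definition xalpha (al : {ffun 'I_n -> bool}) : ps :=
  ps_monom [ffun i => nat_of_bool (al i)].

(* ideals are represented as predicates on S *)
Definition ideal_gen (G : ps -> Prop) : ps -> Prop := fun f =>
  exists (N : nat) (c g : 'I_N -> ps),
    (forall j, G (g j)) /\ f = (fun m => \sum_(j < N) ps_mul (c j) (g j) m).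

Definition ideal_sum (J K : ps -> Prop) : ps -> Prop :=
  ideal_gen (fun f => J f \/ K f).

Definition principal (g : ps) : ps -> Prop := ideal_gen (fun f => f = g).

Definition frob (q : nat) (J : ps -> Prop) : ps -> Prop :=
  ideal_gen (fun f => exists g, J g /\ f = ps_exp g q).

Definition colon (J I : ps -> Prop) : ps -> Prop :=
  fun f => forall g, I g -> J (ps_mul f g).

Definition face_ideal (al : {ffun 'I_n -> bool}) : ps -> Prop :=
  ideal_gen (fun f => exists i, al i /\ f = ps_var i).

Definition ideal_eq (J K : ps -> Prop) : Prop := forall f, J f <-> K f.

Definition sqfree_monomial_ideal (I : ps -> Prop) : Prop :=
  exists B : {set {ffun 'I_n -> bool}},
    ideal_eq I (ideal_gen (fun f => exists2 b, b \in B & f = xalpha b)).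

Definition bigcapI (s : seq {ffun 'I_n -> bool}) (F : {ffun 'I_n -> bool} -> ps -> Prop)
  : ps -> Prop := fun f => forall al, al \in s -> F al f.

(* I = I_{a_1} cap ... cap I_{a_s} is an irredundant (minimal) primary
   decomposition into face ideals *)
Definition min_face_decomp (I : ps -> Prop) (s : seq {ffun 'I_n -> bool}) : Prop :=
  ideal_eq I (bigcapI s face_ideal) /\
  forall al, al \in s ->
    ~ ideal_eq (bigcapI [seq b <- s | b != al] face_ideal) I.

End PS.

(* Main.v *)
From HB Require Import structures.
From mathcomp Require Import all_boot all_algebra.
From mathcomp Require Import boolp.
From mathcomp Require Import zify.
From Stdlib Require Import Classical.
Require Import Defs.
Set Implicit Arguments. Unset Strict Implicit. Unset Printing Implicit Defensive.
Import GRing.Theory.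
Local Open Scope ring_scope.

Section Ring.
Variables (k : fieldType) (n : nat).
Local Notation expo := (expo n).
Local Notation ps := (ps k n).

Definition le_e (a b : expo) := [forall i, (a i <= b i)%N].
Definition eadd (a b : expo) : expo := [ffun i => (a i + b i)%N].

Definition box (m : expo) : seq expo :=
  [seq lowa a | a <- enum (fun a : {ffun 'I_n -> 'I_(bnd m)} => [forall i, (a i <= m i)%N])].

Lemma lowa_inj N : injective (@lowa n N).
Proof. move=> a b /ffunP H; apply/ffunP => i; apply/val_inj; move: (H i); by rewrite !ffunE. Qed.

Lemma box_uniq m : uniq (box m).
Proof. rewrite map_inj_uniq ?enum_uniq //; exact: lowa_inj. Qed.

Lemma mem_box m a : (a \in box m) = le_e a m.
Proof.
apply/idP/idP.
  case/mapP => x; rewrite mem_enum => /forallP Hx ->; apply/forallP => i; by rewrite ffunE.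
move=> /forallP Ha; apply/mapP.
have lt i : (a i < bnd m)%N.
  apply: (leq_ltn_trans (Ha i)); rewrite /bnd ltnS. apply: (leq_trans _ (leq_bigmax i)) => //.
exists [ffun i => Ordinal (lt i)].
  rewrite mem_enum; apply/forallP => i; by rewrite ffunE /=.
by apply/ffunP => i; rewrite !ffunE.
Qed.

Lemma mulE (f g : ps) m : ps_mul f g m = \sum_(a <- box m) f a * g (esub m a).
Proof.
rewrite /ps_mul /box big_map big_enum /=.
by [].
Qed.

Lemma leP' (a b : expo) : reflect (forall i, (a i <= b i)%N) (le_e a b).
Proof. exact: forallP. Qed.

Lemma eqe (a b : expo) : (forall i, (a i = b i :> nat)) -> a = b.
Proof. move=> H; apply/ffunP => i; exact: H. Qed.

Lemma esubE (m a : expo) i : esub m a i = (m i - a i)%N. Proof. by rewrite ffunE. Qed.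
Lemma eaddE (a b : expo) i : eadd a b i = (a i + b i)%N. Proof. by rewrite ffunE. Qed.

Lemma esubK (m a : expo) : le_e a m -> esub m (esub m a) = a.
Proof. move/leP' => H; apply: eqe => i; rewrite !esubE; move: (H i); lia. Qed.

Lemma le_esub (m a : expo) : le_e (esub m a) m.
Proof. apply/leP' => i; rewrite esubE; lia. Qed.

Lemma le_trans_e (a b c : expo) : le_e a b -> le_e b c -> le_e a c.
Proof. move/leP' => H1 /leP' H2; apply/leP' => i; exact: leq_trans (H1 i) (H2 i). Qed.

Lemma sum_perm (F : expo -> k) s1 s2 : uniq s1 -> uniq s2 -> s1 =i s2 ->
  \sum_(a <- s1) F a = \sum_(a <- s2) F a.
Proof. move=> u1 u2 e; apply: perm_big; exact: uniq_perm. Qed.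

Lemma mulC (f g : ps) m : ps_mul f g m = ps_mul g f m.
Proof.
rewrite !mulE [RHS](@sum_perm _ _ (map (esub m) (box m))).
- rewrite [RHS]big_map; apply: eq_big_seq => a; rewrite mem_box => Ha.
  by rewrite esubK // mulrC.
- exact: box_uniq.
- rewrite map_inj_in_uniq ?box_uniq // => a b; rewrite !mem_box => Ha Hb E.
  by rewrite -(esubK Ha) -(esubK Hb) E.
- move=> a; rewrite mem_box; apply/idP/mapP.
    move=> Ha; exists (esub m a); [by rewrite mem_box le_esub | by rewrite esubK].
  by case=> b _ ->; exact: le_esub.
Qed.

Definition e0 : expo := [ffun=> 0%N].

Lemma mul1 (g : ps) m : ps_mul (@ps_one k n) g m = g m.
Proof.
rewrite mulE (bigD1_seq e0) ?box_uniq ?mem_box //=; last by apply/leP' => i; rewrite ffunE.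
rewrite /ps_one /ps_monom /e0 eqxx mul1r big1_seq.
  by rewrite addr0; congr g; apply: eqe => i; rewrite !ffunE subn0.
by move=> a /andP[/negbTE -> _]; rewrite mul0r.
Qed.

Lemma mulDl (f g h : ps) m : ps_mul (ps_add f g) h m = ps_mul f h m + ps_mul g h m.
Proof. by rewrite !mulE -big_split; apply: eq_bigr => a _; rewrite /ps_add mulrDl. Qed.

Lemma box_sub (c m : expo) (F : expo -> k) : le_e c m ->
  \sum_(a <- box c) F a = \sum_(a <- box m | le_e a c) F a.
Proof.
move=> Hc; rewrite -[in RHS]big_filter; apply: sum_perm; rewrite ?box_uniq ?filter_uniq ?box_uniq //.
move=> a; rewrite mem_filter !mem_box; apply/idP/idP.
  by move=> H; rewrite H (le_trans_e H Hc).
by case/andP.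
Qed.

Lemma box_shift (a m : expo) (F : expo -> k) : le_e a m ->
  \sum_(c <- box m | le_e a c) F c = \sum_(b <- box (esub m a)) F (eadd a b).
Proof.
move=> /leP' Ha; rewrite -[in LHS]big_filter -[in RHS](big_map (eadd a) xpredT); apply: sum_perm.
- by rewrite filter_uniq ?box_uniq.
- rewrite map_inj_uniq ?box_uniq // => b1 b2 E; apply: eqe => i.
  by have := congr1 (fun f : expo => (f i : nat)) E; rewrite /= !eaddE; lia.
move=> c; rewrite mem_filter mem_box; apply/andP/mapP.
  case=> /leP' H1 /leP' H2; exists (esub c a).
    by rewrite mem_box; apply/leP' => i; rewrite !esubE; move: (H1 i) (H2 i); lia.
  by apply: eqe => i; rewrite eaddE esubE; move: (H1 i); lia.
case=> b; rewrite mem_box => /leP' Hb ->; split; apply/leP' => i; rewrite eaddE.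
  lia.
by move: (Hb i) (Ha i); rewrite esubE; lia.
Qed.

Lemma mulA (f g h : ps) m : ps_mul f (ps_mul g h) m = ps_mul (ps_mul f g) h m.
Proof.
rewrite mulE [RHS]mulE.
under eq_big_seq => a Ha do rewrite mulE mulr_sumr.
under [RHS]eq_big_seq => c Hc.
  rewrite mulE mulr_suml; move: Hc; rewrite mem_box => Hc; rewrite (box_sub _ Hc).
  rewrite big_mkcond; over.
rewrite exchange_big /=.
apply: eq_big_seq => a; rewrite mem_box => Ha.
rewrite -big_mkcond box_shift //; apply: eq_bigr => b _.
rewrite mulrA; congr (_ * g _ * h _); apply: eqe => i; rewrite !(esubE, eaddE); lia.
Qed.

Definition PS := ps.
HB.instance Definition _ := gen_eqMixin PS.
HB.instance Definition _ := gen_choiceMixin PS.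

Definition ps_opp (f : PS) : PS := fun m => - f m.

Lemma ps_addA : associative (@ps_add k n).
Proof. by move=> f g h; apply: funext => m; rewrite /ps_add addrA. Qed.
Lemma ps_addC : commutative (@ps_add k n).
Proof. by move=> f g; apply: funext => m; rewrite /ps_add addrC. Qed.
Lemma ps_add0 : left_id (@ps_zero k n) (@ps_add k n).
Proof. by move=> f; apply: funext => m; rewrite /ps_add /ps_zero add0r. Qed.
Lemma ps_addN : left_inverse (@ps_zero k n) ps_opp (@ps_add k n).
Proof. by move=> f; apply: funext => m; rewrite /ps_add /ps_zero /ps_opp addNr. Qed.

HB.instance Definition _ := GRing.isZmodule.Build PS ps_addA ps_addC ps_add0 ps_addN.

Lemma ps_mulA : associative (@ps_mul k n).
Proof. by move=> f g h; apply: funext => m; rewrite mulA. Qed.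
Lemma ps_mulC : commutative (@ps_mul k n).
Proof. by move=> f g; apply: funext => m; rewrite mulC. Qed.
Lemma ps_mul1 : left_id (@ps_one k n) (@ps_mul k n).
Proof. by move=> f; apply: funext => m; rewrite mul1. Qed.
Lemma ps_mulDl : left_distributive (@ps_mul k n) (@ps_add k n).
Proof. by move=> f g h; apply: funext => m; rewrite mulDl. Qed.
Lemma ps_one_neq0 : (@ps_one k n : PS) != @ps_zero k n.
Proof.
apply/eqP => H; have := congr1 (fun f : PS => f e0) H.
by rewrite /ps_one /ps_monom /e0 eqxx /ps_zero => /eqP; rewrite oner_eq0.
Qed.

HB.instance Definition _ := GRing.Zmodule_isComNzRing.Build PS ps_mulA ps_mulC ps_mul1 ps_mulDl ps_one_neq0.

Lemma PSmulE (f g : PS) : f * g = ps_mul f g. Proof. by []. Qed.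
Lemma PSaddE (f g : PS) m : (f + g) m = f m + g m. Proof. by []. Qed.
Lemma PS0E m : (0 : PS) m = 0. Proof. by []. Qed.
Lemma PS1E : (1 : PS) = @ps_one k n. Proof. by []. Qed.
End Ring.

Section Gen.
Variables (k : fieldType) (n : nat).
Local Notation expo := (expo n).
Local Notation PS := (PS k n).
Definition monom (b : expo) : PS := ps_monom k b.

Lemma sum_eval (I : Type) (r : seq I) (P : pred I) (F : I -> PS) m :
  (\sum_(i <- r | P i) F i) m = \sum_(i <- r | P i) F i m.
Proof. by apply: (big_morph (fun f : PS => f m)). Qed.

Lemma sum_nz (I : eqType) (r : seq I) (F : I -> k) :
  \sum_(i <- r) F i != 0 -> exists2 i, i \in r & F i != 0.
Proof.
case: (boolP (has (fun i => F i != 0) r)) => [/hasP[i Hi HF] _| /hasPn H]; first by exists i.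
by rewrite big1_seq ?eqxx // => i /andP[_ /H]; rewrite negbK => /eqP.
Qed.

Lemma mul_monom_r (c : PS) b m :
  (c * monom b) m = if le_e b m then c (esub m b) else 0.
Proof.
rewrite PSmulE mulE /monom; case: ifP => Hb.
  rewrite (bigD1_seq (esub m b)) ?box_uniq ?mem_box ?le_esub //= esubK //.
  rewrite /ps_monom eqxx mulr1 big1_seq ?addr0 // => a /andP[Hne Ha].
  rewrite ifF ?mulr0 //; apply/negbTE; apply: contra Hne => /eqP <-.
  by rewrite esubK // -mem_box.
rewrite big1_seq // => a /andP[_ Ha]; rewrite /ps_monom; case: eqP => E; last by rewrite mulr0.
by move: Hb; rewrite -E le_esub.
Qed.

Lemma monom_mul a b : monom a * monom b = monom (eadd a b).
Proof.
apply: funext => m; rewrite mul_monom_r /monom /ps_monom; case: ifP => Hb.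
  case: eqP => E; case: eqP => E' //.
  - by case: E'; rewrite -E; apply: eqe => i; rewrite eaddE esubE; move/leP': Hb => Hb; move: (Hb i); lia.
  - by case: E; rewrite E'; apply: eqe => i; rewrite esubE eaddE; lia.
case: eqP => // E; move: Hb; rewrite E => /negP; case; apply/leP' => i; rewrite eaddE; lia.
Qed.

Definition supp_in (P : expo -> Prop) (f : PS) := forall m, f m != 0 -> P m.
Definition mono (P : expo -> Prop) := forall a b, le_e a b -> P a -> P b.

Lemma supp_mul2 (f g : PS) P Q : supp_in P f -> supp_in Q g ->
  supp_in (fun m => exists a b, [/\ P a, Q b & m = eadd a b]) (f * g).
Proof.
move=> Hf Hg m; rewrite PSmulE mulE => /sum_nz[a]; rewrite mem_box => /leP' Ha.
rewrite mulf_eq0 negb_or => /andP[/Hf Pa /Hg Qb].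
exists a, (esub m a); split => //; apply: eqe => i; rewrite eaddE esubE; move: (Ha i); lia.
Qed.

Lemma supp_mul_r (c g : PS) P : mono P -> supp_in P g -> supp_in P (c * g).
Proof.
move=> HP Hg m /(supp_mul2 (P := fun _ => True) (fun _ _ => I) Hg) [a [b [_ Pb ->]]].
by apply: HP Pb; apply/leP' => i; rewrite eaddE; lia.
Qed.

Lemma supp_monom b : supp_in (fun m => m = b) (monom b).
Proof. by move=> m; rewrite /monom /ps_monom; case: (m =P b) => [//|_]; rewrite eqxx. Qed.

Lemma supp_sum (I : eqType) (r : seq I) (F : I -> PS) Q :
  (forall i, supp_in Q (F i)) -> supp_in Q (\sum_(i <- r) F i).
Proof. by move=> H m; rewrite sum_eval => /sum_nz[i _ /H]. Qed.

Lemma gen_sum (G : PS -> Prop) (f : PS) : ideal_gen G f <->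
  exists N (c g : 'I_N -> PS), (forall j, G (g j)) /\ f = \sum_(j < N) c j * g j.
Proof.
split; case=> N [c [g [HG E]]]; exists N, c, g; split => //; rewrite E; apply: funext => m;
  by rewrite sum_eval.
Qed.

Lemma ideal_gen_supp (G : PS -> Prop) P f : mono P ->
  (forall g, G g -> supp_in P g) -> ideal_gen G f -> supp_in P f.
Proof.
move=> HP HG /gen_sum [N [c [g [Hg ->]]]]; apply: supp_sum => j; apply: supp_mul_r => //.
exact: HG.
Qed.

Lemma gen_in (G : PS -> Prop) g : G g -> ideal_gen G g.
Proof.
move=> Hg; apply/gen_sum; exists 1%N, (fun _ => 1), (fun _ => g); split => //.
by rewrite big_ord1 mul1r.
Qed.

Lemma decomp (gl : seq expo) (G : PS -> Prop) (f : PS) :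
  (forall b, b \in gl -> G (monom b)) ->
  supp_in (fun m => exists2 b, b \in gl & le_e b m) f -> ideal_gen G f.
Proof.
move=> HG Hf; pose t := in_tuple gl; pose gs j := tnth t j.
pose sel m := [pick j | le_e (gs j) m].
pose c j : PS := fun m => if sel (eadd m (gs j)) == Some j then f (eadd m (gs j)) else 0.
apply/gen_sum; exists (size gl), c, (fun j => monom (gs j)); split.
  by move=> j; apply: HG; exact: mem_tnth.
apply: funext => m; rewrite sum_eval.
have E j : (c j * monom (gs j)) m = if le_e (gs j) m && (sel m == Some j) then f m else 0.
  rewrite mul_monom_r; case: ifP => Hb //=; rewrite /c.
  have -> : eadd (esub m (gs j)) (gs j) = m.
    by apply: eqe => i; rewrite eaddE esubE; move/leP': Hb => Hb; move: (Hb i); lia.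
  by [].
under eq_bigr => j _ do rewrite E.
rewrite /sel; case: pickP => [j0 Hj0|Hn].
  rewrite (bigD1 j0) //= Hj0 eqxx big1 ?addr0 // => j Hj.
  by rewrite (inj_eq (@Some_inj _)) eq_sym (negbTE Hj) andbF.
rewrite big1 => [|j _]; last by rewrite Hn.
case: (eqVneq (f m) 0) => // /Hf [b Hb Hle].
by have /(tuple.tnthP t) [j Ej] : b \in t := Hb; move: (Hn j); rewrite /gs -Ej Hle.
Qed.
End Gen.

Section Frob.
Variables (k : fieldType) (n : nat).
Local Notation expo := (expo n).
Local Notation PS := (PS k n).
Local Notation monom := (@monom k n).

Definition emul (q : nat) (b : expo) : expo := [ffun i => (q * b i)%N].
Definition unit (i : 'I_n) : expo := [ffun j => nat_of_bool (j == i)].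
Definition expb (al : {ffun 'I_n -> bool}) : expo := [ffun i => nat_of_bool (al i)].

Lemma ps_expE (g : PS) q : ps_exp g q = g ^+ q.
Proof. by elim: q => // q IH; rewrite exprS -IH. Qed.

Lemma monom_exp b q : monom b ^+ q = monom (emul q b).
Proof.
elim: q => [|q IH].
  by rewrite expr0; congr (ps_monom k _); apply: eqe => i; rewrite !ffunE.
rewrite exprS IH monom_mul; congr (ps_monom k _); apply: eqe => i; rewrite !ffunE mulSn.
by [].
Qed.

Lemma natmul_eval (f : PS) p m : (f *+ p) m = f m *+ p.
Proof. by elim: p => [|p IH]; rewrite ?mulr0n // !mulrS PSaddE IH. Qed.

Lemma pchar_PS p : p \in [pchar k] -> p \in [pchar PS].
Proof.
move=> hp; rewrite inE (pcharf_prime hp) /=; apply/eqP; apply: funext => m.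
by rewrite natmul_eval -mulr_natr (pcharf0 hp) mulr0.
Qed.

Lemma frob_sum p e N (F : 'I_N -> PS) : p \in [pchar k] ->
  (\sum_(j < N) F j) ^+ (p ^ e) = \sum_(j < N) F j ^+ (p ^ e).
Proof.
move=> hp; have pr := pcharf_prime hp.
apply: (big_morph (fun x : PS => x ^+ (p ^ e))).
  move=> x y; apply: exprDn_pchar; rewrite pnatX (pnatE _ pr) (pchar_PS hp); done.
by rewrite expr0n expn_eq0 (gtn_eqF (prime_gt0 pr)).
Qed.
End Frob.

Section Face.
Variables (k : fieldType) (n : nat).
Local Notation expo := (expo n).
Local Notation PS := (PS k n).
Local Notation monom := (@monom k n).

Definition inFace (al : {ffun 'I_n -> bool}) (m : expo) := exists i, al i /\ (0 < m i)%N.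
Definition inFaceQ q (al : {ffun 'I_n -> bool}) (m : expo) := exists i, al i /\ (q <= m i)%N.

Lemma mono_inFaceQ q al : mono (inFaceQ q al).
Proof. move=> a b /leP' H [i [Hi Hq]]; exists i; split => //; exact: leq_trans Hq (H i). Qed.

Lemma mono_inFace al : mono (inFace al).
Proof. move=> a b /leP' H [i [Hi Hq]]; exists i; split => //; exact: leq_trans Hq (H i). Qed.

Lemma var_monom (i : 'I_n) : @ps_var k n i = monom (unit i).
Proof. by []. Qed.

Lemma face_char al (f : PS) : @face_ideal k n al f <-> supp_in (inFace al) f.
Proof.
split.
  apply: ideal_gen_supp; first exact: mono_inFace.
  move=> g [i [Hi ->]] m; rewrite var_monom => /supp_monom ->; exists i; split => //.
  by rewrite ffunE eqxx.
move=> Hf; apply: (@decomp _ _ [seq unit i | i <- [seq i <- enum 'I_n | al i]]).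
  move=> b /mapP [i]; rewrite mem_filter => /andP[Hi _] ->; exists i; split => //.
move=> m /Hf [i [Hi Hm]]; exists (unit i).
  by apply/mapP; exists i => //; rewrite mem_filter Hi mem_enum.
apply/leP' => j; rewrite ffunE; case: eqP => [->|] //.
Qed.

Lemma frob_face p (hp : p \in [pchar k]) e al (g : PS) :
  @face_ideal k n al g -> supp_in (inFaceQ (p ^ e) al) (g ^+ (p ^ e)).
Proof.
move=> /gen_sum [N [c [gg [Hg ->]]]]; rewrite frob_sum //.
apply: supp_sum => j; rewrite exprMn; apply: supp_mul_r; first exact: mono_inFaceQ.
case: (Hg j) => i [Hi ->]; rewrite var_monom monom_exp => m /supp_monom ->.
by exists i; split => //; rewrite ffunE ffunE eqxx muln1.
Qed.
End Face.


Lemma monom_self k n (m : expo n) : (@monom k n m) m = 1.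
Proof. by rewrite /monom /ps_monom eqxx. Qed.

Unset Implicit Arguments.
Set Strict Implicit.
Set Printing Implicit Defensive.

Theorem proposition3p2 (k : fieldType) (p n : nat) (hch : p \in [pchar k])
  (I : ps k n -> Prop) (s : seq {ffun 'I_n -> bool}) :
  sqfree_monomial_ideal I -> min_face_decomp I s ->
  forall e : nat, let q := (p ^ e)%N in
  ideal_eq (colon (frob q I) I)
    (bigcapI s (fun al => ideal_sum (frob q (@face_ideal k n al))
                                    (principal (ps_exp (@xalpha k n al) (q - 1))))).
Proof.
move=> [B HB] [Hs Hmin] e q.
have qE : q = (p ^ e)%N by [].
clearbody q.
have q_gt0 : (0 < q)%N by rewrite qE expn_gt0 prime_gt0 // (pcharf_prime hch).
pose BI (m : expo n) := exists2 b, b \in B & le_e (expb b) m.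
have I2 : forall f : PS k n, I f <-> (forall al, al \in s -> supp_in (inFace al) f).
  move=> f; split.
    by move=> /(Hs f).1 H al Hal; apply/face_char; exact: H.
  by move=> H; apply/(Hs f).2 => al Hal; apply/face_char; exact: H.
have I1 : forall f : PS k n, I f <-> supp_in BI f.
  move=> f; split.
    move=> /(HB f).1; apply: ideal_gen_supp.
      by move=> a b Hab [b0 Hb0 Hle]; exists b0 => //; exact: le_trans_e Hle Hab.
    move=> g [b Hb ->] m /supp_monom ->; exists b => //; apply/leP' => i; done.
  move=> Hf; apply/(HB f).2; apply: (@decomp _ _ [seq expb b | b <- enum B]).
    by move=> b' /mapP[b Hb ->]; exists b => //; rewrite mem_enum in Hb.
  move=> m /Hf [b Hb Hle]; exists (expb b) => //; apply/mapP; exists b => //.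
  by rewrite mem_enum.
have I3 : forall m, BI m <-> (forall al, al \in s -> inFace al m).
  move=> m; split.
    move=> Hm al Hal.
    have : I (monom k m) by apply/I1 => m' /supp_monom ->.
    move=> /I2 /(_ al Hal m); rewrite monom_self oner_eq0; exact.
  move=> Hm; have : I (monom k m).
    by apply/I2 => al Hal m' /supp_monom ->; exact: Hm.
  move=> /I1 /(_ m); rewrite monom_self oner_eq0; exact.
pose FQ (m : expo n) := forall al, al \in s -> inFaceQ q al m.
have F1 : forall f : PS k n, frob q I f -> supp_in FQ f.
  move=> f; apply: ideal_gen_supp.
    by move=> a b Hab H al Hal; exact: mono_inFaceQ Hab (H al Hal).
  move=> g [g0 [Ig0 ->]] m Hm al Hal.
  have Fg0 : @face_ideal k n al g0 by apply: (Hs g0).1 Ig0 al Hal.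
  by move: Hm; rewrite ps_expE qE; exact: (@frob_face k n p hch e al g0 Fg0 m).
have F2 : forall f : PS k n, supp_in FQ f -> frob q I f.
  move=> f Hf; apply: (@decomp _ _ [seq emul q (expb b) | b <- enum B]).
    move=> b' /mapP[b Hb ->]; exists (xalpha k b); split.
      apply/(HB _).2; apply: gen_in; exists b => //; by rewrite mem_enum in Hb.
    by rewrite ps_expE monom_exp.
  move=> m /Hf HF; pose mq : expo n := [ffun i => (m i %/ q)%N].
  have [b Hb Hle] : BI mq.
    apply/I3 => al Hal; case: (HF al Hal) => i [Hi Hq]; exists i; split => //.
    by rewrite ffunE divn_gt0.
  exists (emul q (expb b)); first by apply/mapP; exists b => //; rewrite mem_enum.
  by apply/leP' => i; move/leP': Hle => /(_ i); rewrite !ffunE leq_divRL // mulnC.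
pose inT al (m : expo n) := inFaceQ q al m \/ (forall i, al i -> (q - 1 <= m i)%N).
have T1 : forall al (f : PS k n), ideal_sum (frob q (@face_ideal k n al))
    (principal (ps_exp (@xalpha k n al) (q - 1))) f -> supp_in (inT al) f.
  move=> al f; apply: ideal_gen_supp.
    move=> a b /leP' Hab [H|H]; [left; exact: mono_inFaceQ (introT (leP' _ _) Hab) H|right].
    by move=> i /H Hi; exact: leq_trans Hi (Hab i).
  move=> g [Jg|Kg].
    move=> m Hm; left; move: m Hm; move: Jg; apply: ideal_gen_supp; first exact: mono_inFaceQ.
    by move=> g1 [g0 [Fg0 ->]]; rewrite ps_expE qE; exact: (@frob_face k n p hch e al g0 Fg0).
  move=> m Hm; right; move: m Hm.
  have : supp_in (le_e (emul (q - 1) (expb al))) g.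
    move: Kg; apply: ideal_gen_supp; first by move=> a b Hab H; exact: le_trans_e H Hab.
    move=> g1 ->; rewrite ps_expE; change (xalpha k al) with (monom k (expb al)).
    by rewrite monom_exp => m /supp_monom ->; apply/leP'.
  move=> H m /H /leP' Hle i Hi; move: (Hle i); rewrite !ffunE Hi muln1; done.
have T2 : forall al (f : PS k n), supp_in (inT al) f -> ideal_sum (frob q (@face_ideal k n al))
    (principal (ps_exp (@xalpha k n al) (q - 1))) f.
  move=> al f Hf.
  apply: (@decomp _ _ (rcons [seq emul q (unit i) | i <- [seq i <- enum 'I_n | al i]]
      (emul (q - 1) (expb al)))).
    move=> b; rewrite mem_rcons in_cons => /orP[/eqP ->|/mapP[i]].
      right; apply: gen_in; rewrite ps_expE; change (xalpha k al) with (monom k (expb al)).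
      by rewrite monom_exp.
    rewrite mem_filter => /andP[Hi _] ->; left; apply: gen_in; exists (ps_var k i); split.
      by apply: gen_in; exists i.
    by rewrite ps_expE var_monom monom_exp.
  move=> m /Hf [[i [Hi Hq]]|H].
    exists (emul q (unit i)).
      by rewrite mem_rcons in_cons; apply/orP; right; apply/mapP; exists i => //;
        rewrite mem_filter Hi mem_enum.
    apply/leP' => j; rewrite !ffunE; case: eqP => [->|_]; by rewrite ?muln1 ?muln0.
  exists (emul (q - 1) (expb al)); first by rewrite mem_rcons mem_head.
  apply/leP' => j; rewrite !ffunE; case: (boolP (al j)) => Hj; rewrite ?muln1 ?muln0 //.
  exact: H.
move=> f; split.
- move=> Hf al Hal; apply: T2 => m Hm.
  case: (classic (inT al m)) => // HnT; exfalso.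
  have H1 : forall i, al i -> (m i < q)%N.
    move=> i Hi; rewrite ltnNge; apply/negP => Hq; apply: HnT; left; exists i; done.
  have [j /andP[Hj Hmj]] : exists j, al j && (m j < q - 1)%N.
    case: (boolP [exists j, al j && (m j < q - 1)%N]) => [/existsP //|/existsPn Hn].
    exfalso; apply: HnT; right => i Hi; move: (Hn i); rewrite Hi /= ltnNge negbK; done.
  pose w : expo n := [ffun i => nat_of_bool (~~ al i || (i == j))].
  have Iw : I (monom k w).
    apply/I2 => be Hbe m' /supp_monom ->.
    case: (boolP [exists i, be i && (~~ al i || (i == j))]).
      by move=> /existsP[i /andP[Hbi Hw]]; exists i; split => //; rewrite ffunE Hw.
    move=> /existsPn Hn; exfalso.
    have Hsub : forall i, be i -> al i && (i != j).
      move=> i Hbi; move: (Hn i); rewrite Hbi /= negb_or negbK; done.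
    have Hne : be != al.
      apply/eqP => E; move: (Hsub j); rewrite E Hj eqxx andbF; by move=> /(_ isT).
    apply: (Hmin al Hal) => f0; split.
      move=> H0; apply/(Hs f0).2 => ga Hga; case: (eqVneq ga al) => [->|nga].
        have : @face_ideal k n be f0 by apply: H0; rewrite mem_filter Hne Hbe.
        move/face_char => Hbf; apply/face_char => m0 /Hbf [i [Hbi Hi]].
        by exists i; split => //; case/andP: (Hsub i Hbi).
      by apply: H0; rewrite mem_filter nga Hga.
    by move=> /(Hs f0).1 H0 ga; rewrite mem_filter => /andP[_ Hga]; exact: H0.
  have := F1 _ (Hf _ Iw) (eadd m w).
  have Hle : le_e w (eadd m w) by apply/leP' => i; rewrite eaddE; lia.
  have Ee : esub (eadd m w) w = m by apply: eqe => i; rewrite esubE eaddE; lia.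
  rewrite -PSmulE mul_monom_r Hle Ee.
  move=> /(_ Hm al Hal) [i [Hi Hq]]; move: Hq; rewrite eaddE ffunE Hi /=.
  case: eqP => [->|_] /=; first by move: Hmj; lia.
  by move: (H1 i Hi); lia.
- move=> Hf g Ig; apply: F2.
  have Hfs : supp_in (fun m => forall al, al \in s -> inT al m) f.
    by move=> m Hm al Hal; exact: (T1 al f (Hf al Hal) m Hm).
  have Hgs : supp_in (fun m => forall al, al \in s -> inFace al m) g.
    by move=> m Hm al Hal; exact: ((I2 g).1 Ig al Hal m Hm).
  move=> m /(supp_mul2 Hfs Hgs) [a [b [Ha Hb ->]]] al Hal.
  case: (Hb al Hal) => i [Hi Hbi].
  case: (Ha al Hal) => [[i' [Hi' Hq]]|H].
    by exists i'; split => //; rewrite eaddE; lia.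
  exists i; split => //; rewrite eaddE; move: (H i Hi); lia.
Qed.
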